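(* Let $X$ be a $T_1$ topological space. The following are equivalent: (i) $X$ is finite; (ii) every proper ideal of $C_c(X)_F$ (respectively of $C_c^*(X)_F$) is fixed; (iii) every maximal ideal of $C_c(X)_F$ (respectively of $C_c^*(X)_F$) is fixed; (iv) every $(\mathcal{Z}_c)_F$-filter on $X$ is fixed; (v) every $(\mathcal{Z}_c)_F$-ultrafilter on $X$ is fixed.
   Context: $C_c(X)_F$ denotes the set of all functions $f:X\to\mathbb{R}$ whose range $f(X)$ is countable and whose set of points of discontinuity is finite; $C_c^*(X)_F$ is its subring of bounded functions. $Z(f)=\{x:f(x)=0\}$ and $Z[C_c(X)_F]=\{Z(f):f\in C_c(X)_F\}$. An ideal $I$ is fixed if $\bigcap_{f\in I}Z(f)\neq\emptyset$. A $(\mathcal{Z}_c)_F$-filter on $X$ is a nonempty family $\mathcal{F}\subseteq Z[C_c(X)_F]$ with $\emptyset\notin\mathcal{F}$, closed under finite intersections, and such that $Z\in\mathcal{F}$, $Z'\in Z[C_c(X)_F]$, $Z\subseteq Z'$ imply $Z'\in\mathcal{F}$; a $(\mathcal{Z}_c)_F$-ultrafilter is a maximal $(\mathcal{Z}_c)_F$-filter. A filter $\mathcal{F}$ is fixed if $\bigcap\mathcal{F}\neq\emptyset$. *)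

(* Defs.v *)
From HB Require Import structures.
From mathcomp Require Import all_boot all_order all_algebra.
From mathcomp Require Import all_classical all_reals all_analysis.
Set Implicit Arguments. Unset Strict Implicit. Unset Printing Implicit Defensive.
Import Order.TTheory GRing.Theory Num.Theory.
Import numFieldNormedType.Exports.
Local Open Scope classical_set_scope.
Local Open Scope ring_scope.

Section CcF.
Context {X : topologicalType} {R : realType}.

Definition discont (f : X -> R) : set X := [set x | ~ {for x, continuous f}].

Definition CcF : set (X -> R) :=
  [set f | countable (range f) /\ finite_set (discont f)].

Definition CcF_star : set (X -> R) :=
  [set f | CcF f /\ exists M : R, forall x, `|f x| <= M].

Definition zero_set (f : X -> R) : set X := [set x | f x = 0].

Definition fn_ideal (S : set (X -> R)) (I : set (X -> R)) : Prop :=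
  [/\ I `<=` S, I (fun=> 0),
      (forall f g, I f -> I g -> I (f \+ g)),
      (forall f, I f -> I (fun x => - f x)) &
      (forall f g, S g -> I f -> I (g \* f))].

Definition fn_proper_ideal (S I : set (X -> R)) : Prop :=
  fn_ideal S I /\ ~ I (fun=> 1).

Definition fn_maximal_ideal (S I : set (X -> R)) : Prop :=
  fn_proper_ideal S I /\
  forall J, fn_proper_ideal S J -> I `<=` J -> J = I.

Definition fn_fixed_ideal (I : set (X -> R)) : Prop :=
  exists x : X, forall f, I f -> f x = 0.

Definition ZCcF : set (set X) := [set Z | exists2 f, CcF f & Z = zero_set f].

Definition ZcF_filter (F : set (set X)) : Prop :=
  [/\ F !=set0, F `<=` ZCcF, ~ F set0,
      (forall A B, F A -> F B -> F (A `&` B)) &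
      (forall A B, F A -> ZCcF B -> A `<=` B -> F B)].

Definition ZcF_ultrafilter (F : set (set X)) : Prop :=
  ZcF_filter F /\ forall G, ZcF_filter G -> F `<=` G -> G = F.

Definition fixed_filter (F : set (set X)) : Prop :=
  exists x : X, forall A, F A -> A x.

End CcF.

(* Main.v *)
Require Import Defs.
From HB Require Import structures.
From mathcomp Require Import all_boot all_order all_algebra.
From mathcomp Require Import all_classical all_reals all_analysis.
Import numFieldNormedType.Exports.
Import Order.TTheory GRing.Theory Num.Theory.
Local Open Scope classical_set_scope.
Local Open Scope ring_scope.
Set Implicit Arguments. Unset Strict Implicit.

Lemma seq_bounded (X : eqType) (R : realType) (f : X -> R) (s : seq X) :
  exists M : R, 0 <= M /\ forall x, x \in s -> `|f x| <= M.
Proof.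
elim: s => [|a s [M [M0 HM]]]; first by exists 0; split.
exists (M + `|f a|); split; first by rewrite addr_ge0.
move=> x; rewrite in_cons => /orP[/eqP->|xs]; first by rewrite lerDr.
by apply: le_trans (HM _ xs) _; rewrite lerDl.
Qed.

Lemma fin_bounded (X : choiceType) (R : realType) (f : X -> R) (A : set X) :
  finite_set A -> exists M : R, 0 <= M /\ forall x, A x -> `|f x| <= M.
Proof.
move=> /finite_fsetP [B ->]; have [M [M0 HM]] := seq_bounded f (finmap.enum_fset B).
by exists M; split => // x /= xB; apply: HM.
Qed.

Lemma fs_CcF (X : topologicalType) (R : realType) (hT1 : accessible_space X)
  (f : X -> R) : finite_set (~` zero_set f) ->
  CcF f /\ exists M : R, forall x, `|f x| <= M.
Proof.
move=> fin.
have op : open (zero_set f).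
  by rewrite -[zero_set f]setCK openC; exact: (proj1 (@accessible_finite_set_closed X) hT1 _ fin).
split; last first.
  have [M [M0 HM]] := fin_bounded f fin; exists M => x.
  have [fx0|fx0] := pselect (f x = 0); first by rewrite fx0 normr0.
  exact: HM.
split.
  apply: finite_set_countable.
  apply: (@sub_finite_set _ _ (f @` (~` zero_set f) `|` [set 0])).
    move=> _ [x _ <-]; have [fx0|fx0] := pselect (f x = 0).
      by right.
    by left; exists x.
  by rewrite finite_setU; split; [exact: finite_image|exact: finite_set1].
apply: sub_finite_set fin => x; rewrite /discont /= => ncont fx0; apply: ncont.
apply: (near_cst_continuous 0).
by apply: open_nbhs_nbhs; split.
Qed.
Lemma zorn_ext T (Q : set (set T)) (A0 : set T) : Q A0 ->
  (forall C : set (set T), C `<=` Q -> C !=set0 -> total_on C subset ->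
     Q (\bigcup_(J in C) J)) ->
  exists A, [/\ Q A, A0 `<=` A & forall B, Q B -> A `<=` B -> B = A].
Proof.
move=> QA0 chain.
pose P := [set J : set T | J = set0 \/ (Q J /\ A0 `<=` J)].
have [|A [PA Amax]] := @Zorn_bigcup T P.
  move=> F FP Ftot.
  have [[J0 [FJ0 J0n]]|no] := pselect (exists J, F J /\ J !=set0); last first.
    left; apply/seteqP; split => // x [J FJ Jx]; apply: no; exists J; split => //.
    by exists x.
  pose F' := [set J | F J /\ J !=set0].
  have F'Q : F' `<=` Q.
    move=> J [FJ [x Jx]]; case: (FP _ FJ) => [J0'|[]//].
    by rewrite J0' in Jx.
  have FA0 : forall J, F' J -> A0 `<=` J.
    move=> J [FJ [x Jx]]; case: (FP _ FJ) => [J0'|[]//].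
    by rewrite J0' in Jx.
  have eqU : \bigcup_(J in F) J = \bigcup_(J in F') J.
    apply/seteqP; split => x [J FJ Jx]; first by exists J => //; split => //; exists x.
    by exists J => //; case: FJ.
  right; rewrite eqU; split.
    apply: chain => //; first by exists J0.
    by move=> s t [Fs _] [Ft _]; apply: Ftot.
  by move=> x /(FA0 J0 (conj FJ0 J0n)) xJ; exists J0.
have QA : Q A /\ A0 `<=` A.
  case: PA => [A0'|//].
  have [[x A0x]|A00] := pselect (A0 !=set0).
    exfalso; apply: (Amax A0 _ (or_intror (conj QA0 (@subset_refl _ _)))).
    by rewrite A0'; split => // /(_ x A0x).
  have eA0 : A0 = set0.
    by apply/seteqP; split => // x A0x; apply: A00; exists x.
  by rewrite A0' -eA0; split.
case: QA => QA A0A; exists A; split => // B QB AB.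
apply/seteqP; split => //.
move=> x Bx; apply: contrapT => nAx.
apply: (Amax B _ (or_intror (conj QB (subset_trans A0A AB)))).
by split => // /(_ x Bx).
Qed.
Lemma fin_ideal_fixed (X : topologicalType) (R : realType) (S I : set (X -> R)) :
  finite_set [set: X] -> (forall f, S f) -> fn_proper_ideal S I -> fn_fixed_ideal I.
Proof.
move=> finX Sall [[IS I0 Iadd Ineg Imul] I1]; apply: contrapT => nfix.
have hx : forall x, exists f, I f /\ f x <> 0.
  move=> x; apply: contrapT => nx; apply: nfix; exists x => f If.
  by apply: contrapT => fx; apply: nx; exists f.
have ind : forall s : seq X, exists g,
    [/\ I g, forall y, 0 <= g y & forall y, y \in s -> 0 < g y].
  elim => [|a s [g [Ig g0 gs]]]; first by exists (fun=> 0); split.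
  have [h [Ih ha]] := hx a.
  have hh : forall y, (h \* h) y = h y ^+ 2 by move=> y; rewrite expr2.
  exists (g \+ (h \* h)); split.
  - exact: Iadd Ig (Imul h h (IS _ Ih) Ih).
  - by move=> y; rewrite /= -expr2 addr_ge0 // sqr_ge0.
  - move=> y; rewrite in_cons => /orP[/eqP->|ys].
      rewrite /= -expr2; apply: ltr_wpDl => //; rewrite exprn_even_gt0 //=.
      by apply/eqP.
    by rewrite /= -expr2; apply: ltr_wpDr (gs _ ys); rewrite sqr_ge0.
have [B eB] := finite_fsetP.1 finX.
have [g [Ig g0 gB]] := ind (finmap.enum_fset B).
have gpos : forall y, 0 < g y.
  move=> y; apply: gB; have : [set: X] y by [].
  by rewrite eB.
apply: I1; have -> : (fun=> 1) = (fun y => (g y)^-1) \* g.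
  by apply/funext => y /=; rewrite mulVf // gt_eqF.
exact: Imul.
Qed.

Lemma fin_filter_fixed (X : topologicalType) (R : realType) (F : set (set X)) :
  finite_set [set: X] -> ZcF_filter (R := R) F -> fixed_filter F.
Proof.
move=> finX [[A0 FA0] FZ F0 FI Fup]; apply: contrapT => nfix.
have hx : forall x, exists A, F A /\ ~ A x.
  move=> x; apply: contrapT => nx; apply: nfix; exists x => A FA.
  by apply: contrapT => Ax; apply: nx; exists A.
have ind : forall s : seq X, exists A, F A /\ forall y, y \in s -> ~ A y.
  elim => [|a s [A [FA As]]]; first by exists A0.
  have [B [FB Ba]] := hx a.
  exists (A `&` B); split; first exact: FI.
  move=> y; rewrite in_cons => /orP[/eqP-> [] //|ys [Ay _]].
  exact: As ys Ay.
have [B eB] := finite_fsetP.1 finX.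
have [A [FA AB]] := ind (finmap.enum_fset B).
apply: F0; have <- // : A = set0.
apply/seteqP; split => // y Ay; apply: (AB y) => //.
have : [set: X] y by [].
by rewrite eB.
Qed.
Lemma ideal_chain (X : topologicalType) (R : realType) (S : set (X -> R))
  (C : set (set (X -> R))) : C `<=` fn_proper_ideal S -> C !=set0 ->
  total_on C subset -> fn_proper_ideal S (\bigcup_(J in C) J).
Proof.
move=> CQ [J0 CJ0] Ctot; split; last first.
  by move=> [J CJ J1]; have [_ ] := CQ _ CJ; apply.
split.
- by move=> f [J CJ Jf]; have [[JS _ _ _ _] _] := CQ _ CJ; exact: JS.
- by exists J0 => //; have [[_ J00 _ _ _] _] := CQ _ CJ0.
- move=> f g [J1 CJ1 J1f] [J2 CJ2 J2g].
  have [J12|J21] := Ctot _ _ CJ1 CJ2.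
    exists J2 => //; have [[_ _ Jadd _ _] _] := CQ _ CJ2; exact: Jadd (J12 _ J1f) J2g.
  exists J1 => //; have [[_ _ Jadd _ _] _] := CQ _ CJ1; exact: Jadd J1f (J21 _ J2g).
- by move=> f [J CJ Jf]; exists J => //; have [[_ _ _ Jn _] _] := CQ _ CJ; exact: Jn.
- by move=> f g Sg [J CJ Jf]; exists J => //; have [[_ _ _ _ Jm] _] := CQ _ CJ; exact: Jm.
Qed.

Lemma filter_chain (X : topologicalType) (R : realType)
  (C : set (set (set X))) : C `<=` ZcF_filter (R := R) -> C !=set0 ->
  total_on C subset -> ZcF_filter (R := R) (\bigcup_(J in C) J).
Proof.
move=> CQ [J0 CJ0] Ctot; split.
- have [[A JA] _ _ _ _] := CQ _ CJ0; by exists A, J0.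
- by move=> A [J CJ JA]; have [_ JZ _ _ _] := CQ _ CJ; exact: JZ.
- by move=> [J CJ J0']; have [_ _ Jn _ _] := CQ _ CJ; exact: Jn.
- move=> A B [J1 CJ1 J1A] [J2 CJ2 J2B].
  have [J12|J21] := Ctot _ _ CJ1 CJ2.
    exists J2 => //; have [_ _ _ JI _] := CQ _ CJ2; exact: JI (J12 _ J1A) J2B.
  exists J1 => //; have [_ _ _ JI _] := CQ _ CJ1; exact: JI J1A (J21 _ J2B).
- move=> A B [J CJ JA] ZB AB; exists J => //.
  by have [_ _ _ _ Ju] := CQ _ CJ; exact: Ju JA ZB AB.
Qed.

Definition delta (X : Type) (R : realType) (x : X) : X -> R :=
  fun y => if pselect (y = x) then 1 else 0.

Lemma delta_supp (X : topologicalType) (R : realType) (x : X) :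
  finite_set (~` zero_set (delta R x)).
Proof.
have sub : ~` zero_set (delta R x) `<=` [set x].
  by move=> y; rewrite /zero_set /delta /=; case: (pselect (y = x)) => // nyx; apply.
exact: (sub_finite_set sub (finite_set1 x)).
Qed.

Lemma delta_x (X : Type) (R : realType) (x : X) : delta R x x = 1.
Proof. by rewrite /delta; case: (pselect (x = x)). Qed.

Lemma inf_max_ideal (X : topologicalType) (R : realType) (S : set (X -> R)) :
  ~ finite_set [set: X] ->
  (forall f, finite_set (~` zero_set f) -> S f) ->
  exists I, fn_maximal_ideal S I /\ ~ fn_fixed_ideal I.
Proof.
move=> infX Sfs.
pose I0 := [set f : X -> R | finite_set (~` zero_set f)].
have I0p : fn_proper_ideal S I0.
  split; last first.
    rewrite /I0 /=; apply: contra_not infX; apply: sub_finite_set => x _ /=.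
    by move/eqP; rewrite oner_eq0.
  split.
  - exact: Sfs.
  - rewrite /I0 /=; apply: (@sub_finite_set _ _ set0); last exact: finite_set0.
    by move=> x; rewrite /zero_set /=; apply.
  - move=> f g If Ig; rewrite /I0 /=.
    apply: (sub_finite_set (B := ~` zero_set f `|` ~` zero_set g)).
      move=> x /= fgx; apply: contrapT => /not_orP[/contrapT fx /contrapT gx].
      by apply: fgx; rewrite /zero_set /= in fx gx *; rewrite fx gx addr0.
    by rewrite finite_setU.
  - move=> f If; rewrite /I0 /=; apply: sub_finite_set If => x /= nfx fx.
    by apply: nfx; rewrite /zero_set /= in fx *; rewrite fx oppr0.
  - move=> f g _ If; rewrite /I0 /=; apply: sub_finite_set If => x /= nfx fx.
    by apply: nfx; rewrite /zero_set /= in fx *; rewrite fx mulr0.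
have [M [MQ I0M Mmax]] := zorn_ext I0p (@ideal_chain X R S).
exists M; split; first by split.
move=> [x Mx]; have := Mx (delta R x) (I0M _ (delta_supp R x)).
by rewrite delta_x; apply/eqP; rewrite oner_eq0.
Qed.

Lemma inf_ultrafilter (X : topologicalType) (R : realType) :
  accessible_space X -> ~ finite_set [set: X] ->
  exists F : set (set X), ZcF_ultrafilter (R := R) F /\ ~ fixed_filter F.
Proof.
move=> hT1 infX.
pose F0 := [set A : set X | finite_set (~` A)].
have F0Z : F0 `<=` @ZCcF X R.
  move=> A FA; exists (fun y => if pselect (A y) then 0 else 1 : R).
    apply: (fs_CcF hT1 _).1; apply: sub_finite_set FA => y /=.
    by rewrite /zero_set /=; case: (pselect (A y)).
  apply/seteqP; split => y; rewrite /zero_set /=; case: (pselect (A y)) => //.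
  by move=> _ /eqP; rewrite oner_eq0.
have F0f : ZcF_filter (R := R) F0.
  split => //.
  - by exists setT; rewrite /F0 /= setCT.
  - by rewrite /F0 /= setC0.
  - move=> A B FA FB; rewrite /F0 /= setCI finite_setU; split => //.
  - move=> A B FA _ AB; apply: sub_finite_set FA => y /= nBy Ay.
    exact: nBy (AB _ Ay).
have [U [UQ F0U Umax]] := zorn_ext F0f (@filter_chain X R).
exists U; split; first by split.
move=> [x Ux]; have /Ux : U (~` [set x]).
  apply: F0U; rewrite /F0 /= setCK; exact: finite_set1.
by apply.
Qed.

Theorem theorem3p13 (X : topologicalType) (R : realType)
  (hT1 : @accessible_space X) :
  let P1 := finite_set [set: X] in
  let P2 := forall I, fn_proper_ideal (@CcF X R) I -> fn_fixed_ideal I in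
  let P2s := forall I, fn_proper_ideal (@CcF_star X R) I -> fn_fixed_ideal I in
  let P3 := forall I, fn_maximal_ideal (@CcF X R) I -> fn_fixed_ideal I in
  let P3s := forall I, fn_maximal_ideal (@CcF_star X R) I -> fn_fixed_ideal I in
  let P4 := forall F : set (set X), ZcF_filter (R := R) F -> fixed_filter F in
  let P5 := forall F : set (set X), ZcF_ultrafilter (R := R) F -> fixed_filter F in
  (P1 <-> P2) /\ (P1 <-> P2s) /\ (P1 <-> P3) /\ (P1 <-> P3s) /\
  (P1 <-> P4) /\ (P1 <-> P5).
Proof.
move=> P1 P2 P2s P3 P3s P4 P5.
have fsC : forall f : X -> R, finite_set (~` zero_set f) -> CcF f.
  by move=> f fin; exact: (fs_CcF hT1 fin).1.
have fsCs : forall f : X -> R, finite_set (~` zero_set f) -> CcF_star f.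
  by move=> f fin; exact: (fs_CcF hT1 fin).
have allfs : P1 -> forall f : X -> R, finite_set (~` zero_set f).
  by move=> fin f; apply: sub_finite_set fin.
have contra_max : forall S : set (X -> R), (forall f, finite_set (~` zero_set f) -> S f) ->
    (forall I, fn_maximal_ideal S I -> fn_fixed_ideal I) -> P1.
  move=> S HS H; apply: contrapT => infX.
  have [I [MI nI]] := inf_max_ideal infX HS.
  exact: nI (H _ MI).
have contra_ult : (forall F : set (set X), ZcF_ultrafilter (R := R) F -> fixed_filter F) -> P1.
  move=> H; apply: contrapT => infX.
  have [F [UF nF]] := inf_ultrafilter R hT1 infX.
  exact: nF (H _ UF).
split; [|split; [|split; [|split; [|split]]]].
- split.
    by move=> fin I HI; apply: (fin_ideal_fixed fin _ HI) => f; apply: fsC; apply: allfs.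
  by move=> H; apply: (contra_max _ fsC) => I [HI _]; exact: H.
- split.
    by move=> fin I HI; apply: (fin_ideal_fixed fin _ HI) => f; apply: fsCs; apply: allfs.
  by move=> H; apply: (contra_max _ fsCs) => I [HI _]; exact: H.
- split; last exact: contra_max fsC.
  by move=> fin I [HI _]; apply: (fin_ideal_fixed fin _ HI) => f; apply: fsC; apply: allfs.
- split; last exact: contra_max fsCs.
  by move=> fin I [HI _]; apply: (fin_ideal_fixed fin _ HI) => f; apply: fsCs; apply: allfs.
- split; first by move=> fin F HF; exact: fin_filter_fixed fin HF.
  by move=> H; apply: contra_ult => F [HF _]; exact: H.
- split; last exact: contra_ult.
  by move=> fin F [HF _]; exact: fin_filter_fixed fin HF.
Qed.
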